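(* Let $n\ge r\ge1$, let $\mathcal{O}\subset\mathbb{R}^{n\times r}$ be an open set containing ${\rm St}(n,r)$, let $f:\mathcal{O}\to\mathbb{R}$ be continuously differentiable, and let $L_f$ be a Lipschitz constant of $f$ on ${\rm St}(n,r)$. Consider problem (P): $\min_{X\in\mathcal{S}_{+}^{n,r}}f(X)$, and suppose that, in the case $n>r>1$, each local minimizer of (P) has no zero rows. Then for every local minimizer $X^*$ of (P): 1. if $n=r$ or $n>r=1$, with $\kappa'>0$ a constant such that ${\rm dist}(Z,\mathcal{S}_{+}^{n,r})\le\kappa'{\rm dist}(Z,\mathbb{R}_{+}^{n\times r})$ for all $Z\in{\rm St}(n,r)$, there exists $\delta>0$ such that $f(X)-f(X^* )+\kappa'L_f\vartheta(X)\ge0$ for all $X\in{\rm St}(n,r)$ with $\|X-X^*\|_F\le\delta$; 2. if $n>r>1$, with $\kappa:=\frac{2.1\sqrt{r}[1+3r(n-r)]}{X^*_{i^*j^*}}$ ($X^*_{i^*j^*}$ the smallest nonzero entry of $X^*$), there exists $\delta>0$ such that for all $\epsilon\ge0$ and all $X\in\mathcal{F}_\epsilon:=\{X\in{\rm St}(n,r):\vartheta(X)=\epsilon\}$ with $\|X-X^*\|_F\le\delta$, $f(X)-f(X^* )+\kappa L_f\vartheta(X)\ge0$. Hence each local minimizer of (P) is a local minimizer of $\min_{X\in{\rm St}(n,r)}\{f(X)+\rho\vartheta(X)\}$ for every $\rho\ge\max(\kappa',\kappa)L_f$, and conversely, for any $\rho>0$, each local minimizer of $\min_{X\in{\rm St}(n,r)}\{f(X)+\rho\vartheta(X)\}$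 that is entrywise nonnegative is a local minimizer of (P).
   Context: ${\rm St}(n,r):=\{X\in\mathbb{R}^{n\times r}: X^\top X=I_r\}$, $\mathbb{R}_{+}^{n\times r}$ the entrywise nonnegative matrices, $\mathcal{S}_{+}^{n,r}:=\mathbb{R}_{+}^{n\times r}\cap{\rm St}(n,r)$, ${\rm dist}$ the Frobenius-norm distance, and $\vartheta(X):=\sum_{i,j}\max(0,-X_{ij})$. *)

(* Defs.v *)
From HB Require Import structures.
From mathcomp Require Import all_boot all_order all_algebra.
From mathcomp Require Import all_classical all_reals all_analysis.
Set Implicit Arguments. Unset Strict Implicit. Unset Printing Implicit Defensive.
Import Order.TTheory GRing.Theory Num.Theory.
Import numFieldNormedType.Exports.
Local Open Scope classical_set_scope.
Local Open Scope ring_scope.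

Section Defs.
Context {R : realType} {n r : nat}.
Implicit Types (X Y Z : 'M[R]_(n, r)) (S : set 'M[R]_(n, r)).

Definition frob X : R := Num.sqrt (\sum_(i < n) \sum_(j < r) X i j ^+ 2).

Definition distF Z S : R := inf [set frob (Z - Y) | Y in S].

Definition Stiefel : set 'M[R]_(n, r) := [set X | X^T *m X = 1%:M].

Definition nonneg_mx : set 'M[R]_(n, r) := [set X | forall i j, 0 <= X i j].

Definition Splus : set 'M[R]_(n, r) := nonneg_mx `&` Stiefel.

Definition vartheta X : R := \sum_(i < n) \sum_(j < r) Num.max 0 (- X i j).

Definition min_nz_entry X : R :=
  inf [set x | exists i j, X i j != 0 /\ x = X i j].

Definition no_zero_rows X : Prop := forall i : 'I_n, exists j : 'I_r, X i j != 0.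

Definition local_min_on (g : 'M[R]_(n, r) -> R) S X : Prop :=
  S X /\ exists delta : R, 0 < delta /\
    forall Y, S Y -> frob (Y - X) <= delta -> g X <= g Y.

Definition lipschitz_const_on (f : 'M[R]_(n, r) -> R) S (L : R) : Prop :=
  forall X Y, S X -> S Y -> `|f X - f Y| <= L * frob (X - Y).

(* f is continuously differentiable on O: differentiable at every point of O,
   and every directional derivative X |-> 'D_V f X is continuous on O
   (in finite dimension this is continuity of the differential). *)
Definition C1_on (f : 'M[R]_(n, r) -> R) (O : set 'M[R]_(n, r)) : Prop :=
  (forall X, O X -> differentiable f X) /\
  (forall (V X : 'M[R]_(n, r)), O X -> {for X, continuous ('D_V f)}).

End Defs.

(* Main.v *)
Require Import Defs.
From HB Require Import structures.
From mathcomp Require Import all_boot all_order all_algebra.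
From mathcomp Require Import all_classical all_reals all_analysis.
From mathcomp Require Import ring lra.
Import Order.TTheory GRing.Theory Num.Theory.
Import numFieldNormedType.Exports.
Local Open Scope classical_set_scope.
Local Open Scope ring_scope.

Section Aux.
Context {R : realType}.

Lemma sumsq_le (I : finType) (a : I -> R) : (forall i, 0 <= a i) ->
  \sum_i a i ^+ 2 <= (\sum_i a i) ^+ 2.
Proof.
move=> a0; rewrite [X in _ <= X]expr2 mulr_suml; apply: ler_sum => i _.
rewrite expr2 ler_wpM2l //.
by rewrite (bigD1 i) //= lerDl sumr_ge0.
Qed.

Lemma sum_ge_term (I : finType) (a : I -> R) i : (forall i, 0 <= a i) ->
  a i <= \sum_i a i.
Proof. by move=> a0; rewrite (bigD1 i) //= lerDl sumr_ge0. Qed.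

Context {n r : nat}.
Implicit Types (A B X Y Xs : 'M[R]_(n, r)).

Definition sqF A : R := \sum_(i < n) \sum_(j < r) A i j ^+ 2.
Definition l1 A : R := \sum_(i < n) \sum_(j < r) `|A i j|.

Lemma sqF_ge0 A : 0 <= sqF A.
Proof. by apply: sumr_ge0 => i _; apply: sumr_ge0 => j _; rewrite sqr_ge0. Qed.

Lemma frob_ge0 A : 0 <= frob A.
Proof. exact: sqrtr_ge0. Qed.

Lemma frob_sq A : frob A ^+ 2 = sqF A.
Proof. by rewrite /frob sqr_sqrtr // sqF_ge0. Qed.

Lemma frob_le_sq A a : 0 <= a -> sqF A <= a ^+ 2 -> frob A <= a.
Proof. by move=> a0 h; rewrite /frob -(ger0_norm a0) -sqrtr_sqr ler_sqrt // sqr_ge0. Qed.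

Lemma sq_le_frob A a : frob A <= a -> sqF A <= a ^+ 2.
Proof. move=> h; rewrite -frob_sq !expr2; apply: ler_pM => //; exact: frob_ge0. Qed.

Lemma entry_sq_le A i j : A i j ^+ 2 <= sqF A.
Proof.
have h1 := @sum_ge_term _ (fun i => \sum_j A i j ^+ 2) i.
have h2 := @sum_ge_term _ (fun j => A i j ^+ 2) j.
apply: le_trans (h1 _); last by move=> k; apply: sumr_ge0 => *; rewrite sqr_ge0.
by apply: h2 => k; rewrite sqr_ge0.
Qed.

Lemma entry_le_frob A i j : `|A i j| <= frob A.
Proof. by rewrite -sqrtr_sqr /frob ler_sqrt ?sqF_ge0 // entry_sq_le. Qed.

Lemma frob_le_l1 A : frob A <= l1 A.
Proof.
apply: frob_le_sq; first by apply: sumr_ge0 => i _; apply: sumr_ge0.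
have h1 := @sumsq_le _ (fun i => \sum_j `|A i j|).
apply: le_trans (h1 _); last by move=> i; apply: sumr_ge0.
apply: ler_sum => i _.
have h2 := @sumsq_le _ (fun j => `|A i j|).
apply: le_trans (h2 _) => //.
by apply: ler_sum => j _; rewrite real_normK // num_real.
Qed.

Lemma frob_add A B a : frob A <= a -> frob B <= a -> frob (A + B) <= 2 * a.
Proof.
move=> hA hB; have a0 : 0 <= a by apply: le_trans hA; apply: frob_ge0.
apply: frob_le_sq; first lra.
have h1 := sq_le_frob _ _ hA; have h2 := sq_le_frob _ _ hB.
apply: (@le_trans _ _ (2 * sqF A + 2 * sqF B)).
  2: have -> : (2 * a) ^+ 2 = 2 * a ^+ 2 + 2 * a ^+ 2 by ring.
  2: by apply: lerD; rewrite ler_wpM2l.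
rewrite /sqF !mulr_sumr -big_split /=; apply: ler_sum => i _.
rewrite !mulr_sumr -big_split /=; apply: ler_sum => j _.
rewrite mxE; set x := A i j; set y := B i j.
have -> : 2 * x ^+ 2 + 2 * y ^+ 2 = (x + y) ^+ 2 + (x - y) ^+ 2 by ring.
by rewrite lerDl sqr_ge0.
Qed.

Lemma frobBC A B : frob (A - B) = frob (B - A).
Proof.
rewrite /frob; congr Num.sqrt; apply: eq_bigr => i _; apply: eq_bigr => j _.
by rewrite !mxE -sqrrN opprB.
Qed.

Lemma sqF_le A B : (forall i j, `|A i j| <= `|B i j|) -> sqF A <= sqF B.
Proof.
move=> h; apply: ler_sum => i _; apply: ler_sum => j _.
by rewrite -(real_normK (num_real (A i j))) -(real_normK (num_real (B i j))) ler_sqr ?nnegrE // h.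
Qed.

Lemma frob_le_entry A B : (forall i j, `|A i j| <= `|B i j|) -> frob A <= frob B.
Proof. by move=> h; rewrite /frob ler_sqrt ?sqF_ge0 // sqF_le. Qed.

Lemma stiefel_entry X j k : Stiefel X ->
  \sum_i X i j * X i k = (j == k)%:R.
Proof.
move=> /matrixP /(_ j k); rewrite !mxE => <-.
by apply: eq_bigr => i _; rewrite mxE.
Qed.

Lemma stiefel_abs_le1 X i j : Stiefel X -> `|X i j| <= 1.
Proof.
move=> /(stiefel_entry _ j j); rewrite eqxx /= => h.
have : X i j ^+ 2 <= 1.
  rewrite (_ : 1 = \sum_i X i j * X i j); last by rewrite h.
  rewrite expr2; apply: (@sum_ge_term _ (fun i => X i j * X i j) i).
  by move=> k; rewrite -expr2 sqr_ge0.
rewrite -real_normK ?num_real // -[X in _ <= X](expr1n _ 2) ler_sqr //.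
by rewrite nnegrE.
Qed.

Lemma vartheta_ge0 X : 0 <= vartheta X.
Proof. by apply: sumr_ge0 => i _; apply: sumr_ge0 => j _; rewrite le_max lexx. Qed.

Lemma vartheta_nonneg X : nonneg_mx X -> vartheta X = 0.
Proof.
move=> h; apply: big1 => i _; apply: big1 => j _.
by rewrite max_l // oppr_le0 h.
Qed.

Lemma lf_ge0 (f : 'M[R]_(n, r) -> R) Lf Xs : (1 <= r)%N ->
  lipschitz_const_on f (@Stiefel R n r) Lf -> Stiefel Xs -> 0 <= Lf.
Proof.
move=> r1 hl hX.
have hN : Stiefel (- Xs).
  have e : (- Xs)^T = - Xs^T by apply/matrixP=> i j; rewrite !mxE.
  by rewrite /Stiefel /= e mulNmx mulmxN opprK.
have h := hl Xs (- Xs) hX hN.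
have := le_trans (normr_ge0 _) h.
have [fp|f0] := boolP (0 < frob (Xs - - Xs)); first by rewrite pmulr_lge0.
have f00 : frob (Xs - - Xs) = 0.
  by apply/eqP; rewrite eq_le leNgt f0 frob_ge0.
pose j0 : 'I_r := Ordinal r1.
have := stiefel_entry _ j0 j0 hX; rewrite eqxx /=.
rewrite big1; first by move/eqP; rewrite eq_sym oner_eq0.
move=> i _.
have := entry_le_frob (Xs - - Xs) i j0; rewrite f00 !mxE opprK normr_le0 => /eqP.
move=> h2; have -> : Xs i j0 = 0.
  move: h2; rewrite -mulr2n => /eqP; rewrite mulrn_eq0 /=; move/eqP.
  by []. by rewrite mul0r.
Qed.

Lemma conclude (f : 'M[R]_(n, r) -> R) Lf Xs X Y K v e : 0 <= Lf ->
  lipschitz_const_on f (@Stiefel R n r) Lf -> Stiefel X -> Stiefel Y ->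
  f Xs <= f Y -> frob (X - Y) <= K * v + e ->
  - (Lf * e) <= f X - f Xs + K * Lf * v.
Proof.
move=> L0 hl hX hY hm hd.
have h := hl X Y hX hY; move: h; rewrite ler_norml => /andP[h1 _].
have h2 : Lf * frob (X - Y) <= Lf * (K * v + e) by rewrite ler_wpM2l.
have -> : K * Lf * v = Lf * (K * v) by ring.
move: h2; rewrite mulrDr; lra.
Qed.

Lemma eps_arg (Lf c A : R) : 0 < c -> 0 <= Lf ->
  (forall e, 0 < e -> e <= c -> - (Lf * e) <= A) -> 0 <= A.
Proof.
move=> c0 L0 h; apply/ler_addgt0Pr => e e0.
pose e' := Num.min c (e / (Lf + 1)).
have L1 : 0 < Lf + 1 by lra.
have e'0 : 0 < e' by rewrite lt_min c0 divr_gt0.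
have hA : - (Lf * e') <= A by apply: h => //; rewrite ge_min lexx.
have : e' <= e / (Lf + 1) by rewrite ge_min lexx orbT.
rewrite ler_pdivlMr // => he.
have : Lf * e' <= e' * (Lf + 1) by nra.
lra.
Qed.

Lemma local_from_bound (f : 'M[R]_(n, r) -> R) Xs (KL rho d : R) :
  Splus Xs -> 0 < d ->
  (forall X, Stiefel X -> frob (X - Xs) <= d -> 0 <= f X - f Xs + KL * vartheta X) ->
  KL <= rho -> local_min_on (fun X => f X + rho * vartheta X) (@Stiefel R n r) Xs.
Proof.
move=> [nn st] d0 h hr; split => //; exists d; split => // Y hY hd.
rewrite vartheta_nonneg // mulr0 addr0.
have := h Y hY hd; have := vartheta_ge0 Y => v0.
have : KL * vartheta Y <= rho * vartheta Y by rewrite ler_wpM2r.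
lra.
Qed.

Lemma converse_part (f : 'M[R]_(n, r) -> R) rho X :
  local_min_on (fun Y => f Y + rho * vartheta Y) (@Stiefel R n r) X ->
  nonneg_mx X -> local_min_on f Splus X.
Proof.
move=> [st [d [d0 h]]] nn; split; first by split.
exists d; split => // Y [nnY stY] hd.
have := h Y stY hd; rewrite !vartheta_nonneg // !mulr0 !addr0 //.
Qed.

Lemma col_nz X j : Stiefel X -> exists i, X i j != 0.
Proof.
move=> hX; have := stiefel_entry _ j j hX; rewrite eqxx /=.
have [//|hn] := pselect (exists i, X i j != 0).
rewrite big1; first by move/eqP; rewrite eq_sym oner_eq0.
move=> i _; have : X i j == 0 by apply/negPn/negP => hh; apply: hn; exists i.
by move/eqP ->; rewrite mul0r.
Qed.

Lemma min_nz_facts Xs : (1 <= r)%N -> Splus Xs ->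
  0 < min_nz_entry Xs /\ min_nz_entry Xs <= 1 /\
  (forall i j, Xs i j != 0 -> min_nz_entry Xs <= Xs i j).
Proof.
move=> r1 [nn st].
set E := [set x | exists i j, Xs i j != 0 /\ x = Xs i j].
pose j0 : 'I_r := Ordinal r1.
have [i0 hi0] := col_nz _ j0 st.
have En : E !=set0 by exists (Xs i0 j0); exists i0, j0.
pose m0 := \big[Order.min/1]_(p : 'I_n * 'I_r | Xs p.1 p.2 != 0) Xs p.1 p.2.
have m0p : 0 < m0.
  rewrite /m0; elim/big_ind: _ => //.
    by move=> x y hx hy; rewrite lt_min hx hy.
  by move=> p hp; rewrite lt_def hp nn.
have lb : lbound E m0.
  move=> y [i [j [hij ->]]].
  exact: (@bigmin_le_cond _ _ _ 1 (i, j) (fun p : 'I_n * 'I_r => Xs p.1 p.2 != 0) (fun p => Xs p.1 p.2) hij).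
have hl : has_lbound E by exists m0.
have ge : forall i j, Xs i j != 0 -> min_nz_entry Xs <= Xs i j.
  by move=> i j hij; apply: (ge_inf hl); exists i, j.
split; first by apply: lt_le_trans m0p _; apply: lb_le_inf.
split => //.
apply: le_trans (ge _ _ hi0) _.
by apply: le_trans (real_ler_norm (num_real _)) (stiefel_abs_le1 _ _ _ st).
Qed.

Lemma kappa_ge (m : R) : 0 < m -> m <= 1 -> (1 < r)%N -> (r < n)%N ->
  2 * (1 + 4 * r%:R / m) <=
  21%:R / 10%:R * Num.sqrt r%:R * (1 + 3%:R * r%:R * (n - r)%:R) / m.
Proof.
move=> m0 m1 r2 rn.
set t := Num.sqrt r%:R.
have t0 : 0 <= t by apply: sqrtr_ge0.
have tt : t ^+ 2 = r%:R by rewrite sqr_sqrtr // ler0n.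
have hr : 2 <= r%:R :> R by rewrite (ler_nat R 2 r).
have hq : 1 <= (n - r)%:R :> R by rewrite (ler_nat R 1 (n - r)) subn_gt0.
set q := (n - r)%:R in hq *.
have t75 : 7 / 5 <= t.
  rewrite leNgt; apply/negP => ht.
  have : t ^+ 2 < (7 / 5) ^+ 2 by rewrite ltr_pXn2r // ?nnegrE //.
  rewrite tt; lra.
have hA : 1 + 3 * t ^+ 2 <= 1 + 3%:R * r%:R * q.
  rewrite tt lerD2l -[X in X <= _]mulr1 ler_wpM2l //; lra.
have h21 : 2 <= 21%:R / 10%:R :> R by lra.
rewrite ler_pdivlMr //.
have -> : 2 * (1 + 4 * r%:R / m) * m = 2 * m + 8 * r%:R by field; rewrite gt_eqF.
have e1 : 2 * t * (1 + 3 * t ^+ 2) <= 21%:R / 10%:R * t * (1 + 3%:R * r%:R * q).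
  apply: ler_pM => //; first by rewrite mulr_ge0.
    by have := sqr_ge0 t; lra.
  by rewrite ler_wpM2r.
apply: le_trans e1.
have e2 : 0 <= t ^+ 2 * (6 * t - 8) by rewrite mulr_ge0 ?sqr_ge0 //; lra.
have -> : 2 * t * (1 + 3 * t ^+ 2) = t ^+ 2 * (6 * t - 8) + 8 * t ^+ 2 + 2 * t by ring.
move: e2; set w := t ^+ 2 * (6 * t - 8) => e2; rewrite tt; lra.
Qed.

Definition Umat Xs X : 'M[R]_(n, r) :=
  \matrix_(i, j) (if Xs i j != 0 then Num.max (X i j) 0 else 0).
Definition nuc Xs X j : R := Num.sqrt (\sum_i Umat Xs X i j ^+ 2).
Definition Ymat Xs X : 'M[R]_(n, r) := \matrix_(i, j) (Umat Xs X i j / nuc Xs X j).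

Lemma UE Xs X i j : Umat Xs X i j = if Xs i j != 0 then Num.max (X i j) 0 else 0.
Proof. by rewrite mxE. Qed.

Lemma U_ge0 Xs X i j : 0 <= Umat Xs X i j.
Proof. by rewrite UE; case: ifP => _ //; rewrite le_max lexx orbT. Qed.

Lemma uz_s (x : R) (b : bool) :
  (if b then Num.max x 0 else 0) * (x - (if b then Num.max x 0 else 0)) = 0.
Proof.
case: b; last by rewrite mul0r.
have [h|h] := leP 0 x.
  by rewrite subrr mulr0.
by rewrite mul0r.
Qed.

Lemma zabs_s (x : R) (b : bool) : `|x - (if b then Num.max x 0 else 0)| <=
  Num.max 0 (- x) + (if b then 0 else Num.max x 0).
Proof.
have [h|h] := leP 0 x.
  rewrite (@max_l _ _ 0 (- x)) ?oppr_le0 //.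
  by case: b; rewrite ?subrr ?normr0 ?addr0 ?add0r ?subr0 ?ger0_norm.
rewrite (@max_r _ _ 0 (- x)); last by rewrite oppr_ge0 ltW.
by case: b; rewrite ?subr0 ?addr0 ltr0_norm.
Qed.

Lemma zle_s (x y : R) (b : bool) : 0 <= y -> (~~ b -> y = 0) ->
  `|x - (if b then Num.max x 0 else 0)| <= `|x - y|.
Proof.
move=> y0 hb; case: b hb => hb; last by rewrite hb.
have [h|h] := leP 0 x.
  by rewrite subrr normr0 normr_ge0.
rewrite subr0 ltr0_norm // ler_normr; apply/orP; right.
lra.
Qed.

Lemma UZ0 Xs X i j : Umat Xs X i j * (X - Umat Xs X) i j = 0.
Proof. rewrite !mxE; exact: uz_s. Qed.

Lemma sq_split (x u : R) : u * (x - u) = 0 -> x ^+ 2 = u ^+ 2 + (x - u) ^+ 2.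
Proof.
move=> h; have -> : (x - u) ^+ 2 = x ^+ 2 - u ^+ 2 - 2 * (u * (x - u)) by ring.
rewrite h; ring.
Qed.

Lemma Xsq Xs X i j : X i j ^+ 2 = Umat Xs X i j ^+ 2 + (X - Umat Xs X) i j ^+ 2.
Proof. move: (UZ0 Xs X i j); rewrite !mxE; apply: sq_split. Qed.

Lemma Zabs Xs X i j : `|(X - Umat Xs X) i j| <=
  Num.max 0 (- X i j) + (if Xs i j != 0 then 0 else Num.max (X i j) 0).
Proof. rewrite !mxE; exact: zabs_s. Qed.

Lemma Zle Xs X i j : nonneg_mx Xs -> `|(X - Umat Xs X) i j| <= `|X i j - Xs i j|.
Proof.
move=> nn; rewrite !mxE; apply: zle_s; first exact: nn.
by move/negbNE/eqP.
Qed.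

Lemma subE A B i j : (A - B) i j = A i j - B i j.
Proof. by rewrite !mxE. Qed.

Lemma pn_s (a b : R) : `|a| <= 1 -> `|b| <= 1 ->
  Num.max a 0 * Num.max b 0 - (Num.max 0 (- a) + Num.max 0 (- b)) <= a * b.
Proof.
rewrite !ler_norml => /andP[a1 a2] /andP[b1 b2].
have [ha|ha] := leP 0 a; have [hb|hb] := leP 0 b.
- rewrite (@max_l _ _ 0 (- a)) ?oppr_le0 // (@max_l _ _ 0 (- b)) ?oppr_le0 //.
  lra.
- rewrite (@max_l _ _ 0 (- a)) ?oppr_le0 // (@max_r _ _ 0 (- b)); last by rewrite oppr_ge0 ltW.
  rewrite mulr0 add0r sub0r opprK.
  have : b * 1 <= b * a by rewrite ler_wnM2l ?(ltW hb).
  lra.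
- rewrite (@max_r _ _ 0 (- a)); last by rewrite oppr_ge0 ltW.
  rewrite (@max_l _ _ 0 (- b)) ?oppr_le0 // mul0r addr0 sub0r opprK.
  have : a * 1 <= a * b by rewrite ler_wnM2l ?(ltW ha).
  lra.
- rewrite (@max_r _ _ 0 (- a)); last by rewrite oppr_ge0 ltW.
  rewrite (@max_r _ _ 0 (- b)); last by rewrite oppr_ge0 ltW.
  rewrite mul0r sub0r.
  have : 0 <= a * b by rewrite nmulr_rge0 // (ltW hb).
  lra.
Qed.

Lemma pair_bound X j k : Stiefel X -> j != k ->
  \sum_i Num.max (X i j) 0 * Num.max (X i k) 0 <=
  \sum_i (Num.max 0 (- X i j) + Num.max 0 (- X i k)).
Proof.
move=> hX jk; rewrite -subr_le0 -sumrB.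
have h := stiefel_entry _ j k hX; rewrite (negbTE jk) /= in h.
apply: (@le_trans _ _ (\sum_i X i j * X i k)); last by rewrite h.
apply: ler_sum => i _; apply: pn_s; exact: stiefel_abs_le1.
Qed.

Lemma Q_bound Xs X (m : R) : no_zero_rows Xs -> 0 < m -> Stiefel X ->
  (forall i j, Xs i j != 0 -> m / 2 <= X i j) ->
  \sum_i \sum_j (if Xs i j != 0 then 0 else Num.max (X i j) 0) <=
  4 * r%:R / m * vartheta X.
Proof.
move=> nzr m0 hX Xpos.
pose P i j := Num.max (X i j) 0.
pose N i j := Num.max 0 (- X i j).
have P0 : forall i j, 0 <= P i j by move=> i j; rewrite /P le_max lexx orbT.
have N0 : forall i j, 0 <= N i j by move=> i j; rewrite /N le_max lexx.
pose F i j k := if k != j then P i j * P i k else 0.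
have F0 : forall i j k, 0 <= F i j k.
  by move=> i j k; rewrite /F; case: ifP => // _; exact: mulr_ge0.
have m2 : 0 <= 2 / m by rewrite divr_ge0 // ltW.
have step1 : forall i j, (if Xs i j != 0 then 0 else P i j) <= 2 / m * \sum_k F i j k.
  move=> i j; case: ifP => hs.
    by rewrite mulr_ge0 // sumr_ge0.
  have [k0 hk0] := nzr i.
  have k0j : k0 != j.
    by apply/eqP => e; move: hk0; rewrite e hs.
  have hP : m / 2 <= P i k0 by rewrite /P le_max Xpos.
  have hS : P i j * P i k0 <= \sum_k F i j k.
    apply: (le_trans _ (@sum_ge_term _ (F i j) k0 (F0 i j))).
    by rewrite /F k0j.
  have e : P i j = 2 / m * (P i j * (m / 2)) by field; rewrite gt_eqF.
  apply: (@le_trans _ _ (2 / m * (P i j * (m / 2)))); first by rewrite -e.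
  apply: ler_wpM2l => //.
  apply: le_trans hS; exact: ler_wpM2l.
have step2 : \sum_i \sum_j (if Xs i j != 0 then 0 else P i j) <=
    2 / m * \sum_i \sum_j \sum_k F i j k.
  rewrite mulr_sumr; apply: ler_sum => i _; rewrite mulr_sumr; apply: ler_sum => j _.
  exact: step1.
have ex : \sum_i \sum_j \sum_k F i j k = \sum_j \sum_k \sum_i F i j k.
  rewrite exchange_big /=; apply: eq_bigr => j _; exact: exchange_big.
pose c j := \sum_i N i j.
have step3 : forall j k, \sum_i F i j k <= c j + c k.
  move=> j k; case: (eqVneq k j) => [->|jk].
    rewrite big1; first by rewrite addr_ge0 // sumr_ge0.
    by move=> i _; rewrite /F eqxx.
  rewrite (eq_bigr (fun i => P i j * P i k)); last by move=> i _; rewrite /F jk.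
  rewrite /c -big_split /=; apply: pair_bound => //; by rewrite eq_sym.
pose V := \sum_j c j.
have step4 : \sum_j \sum_(k < r) (c j + c k) = (V + V) *+ r.
  rewrite mulrnDl.
  transitivity (\sum_j (c j *+ r + V)).
    by apply: eq_bigr => j _; rewrite big_split /= sumr_const card_ord.
  by rewrite big_split /= sumrMnl sumr_const card_ord.
have Veq : V = vartheta X by rewrite /V /c /vartheta exchange_big.
apply: (le_trans step2); rewrite ex.
apply: (@le_trans _ _ (2 / m * ((V + V) *+ r))).
  apply: ler_wpM2l => //; rewrite -step4.
  apply: ler_sum => j _; apply: ler_sum => k _; exact: step3.
rewrite -[(V + V) *+ r]mulr_natr.
have e : 2 / m * ((V + V) * r%:R) = 4 * r%:R / m * vartheta X.
  by rewrite -Veq; field; rewrite gt_eqF.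
by rewrite e.
Qed.

Lemma YE Xs X i j : Ymat Xs X i j = Umat Xs X i j / nuc Xs X j.
Proof. by rewrite /Ymat mxE. Qed.

Lemma stiefel_of_entries X :
  (forall j k, \sum_i X i j * X i k = (j == k)%:R) -> Stiefel X.
Proof.
move=> h; apply/matrixP => j k; rewrite !mxE -h.
by apply: eq_bigr => i _; rewrite mxE.
Qed.

Lemma construct Xs X (m d : R) :
  Splus Xs -> no_zero_rows Xs -> 0 < m ->
  (forall i j, Xs i j != 0 -> m <= Xs i j) ->
  Stiefel X -> frob (X - Xs) <= d -> d <= m / 4 -> d <= 1 / 2 ->
  exists Y, Splus Y /\ frob (X - Y) <= 2 * (1 + 4 * r%:R / m) * vartheta X /\
            frob (Y - Xs) <= 4 * d.
Proof.
move=> [nn st] nzr m0 mle hX hd dm d2.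
have d0 : 0 <= d by apply: le_trans (frob_ge0 _) hd.
have huniq : forall i j k, Xs i j != 0 -> Xs i k != 0 -> j = k.
  move=> i j k hj hk; apply/eqP; apply: contraT => jk.
  have h := stiefel_entry _ j k st; rewrite (negbTE jk) /= in h.
  have p1 : 0 < Xs i j * Xs i k.
    by apply: mulr_gt0; rewrite lt_def ?hj ?hk nn.
  have p2 : Xs i j * Xs i k <= \sum_i0 Xs i0 j * Xs i0 k.
    exact: (@sum_ge_term _ (fun i0 => Xs i0 j * Xs i0 k) i
              (fun i0 => mulr_ge0 (nn i0 j) (nn i0 k))).
  by move: (lt_le_trans p1 p2); rewrite h ltxx.
have Xcl : forall i j, `|X i j - Xs i j| <= d.
  by move=> i j; apply: le_trans hd; rewrite -subE; exact: entry_le_frob.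
have Xpos : forall i j, Xs i j != 0 -> m / 2 <= X i j.
  move=> i j h; have h3 := mle i j h; move: (Xcl i j).
  by rewrite ler_norml => /andP[h1 h2]; lra.
set U := Umat Xs X; set Z := X - U; set nu := nuc Xs X; set Y := Ymat Xs X.
have colpos : forall j, exists2 i, Xs i j != 0 & 0 < U i j.
  move=> j; have [i hi] := col_nz _ j st; exists i => //.
  rewrite /U UE hi /= lt_max; apply/orP; left; have := Xpos i j hi; lra.
have nusq : forall j, nu j ^+ 2 = \sum_i U i j ^+ 2.
  move=> j; rewrite /nu /nuc sqr_sqrtr //; apply: sumr_ge0 => i _; exact: sqr_ge0.
have nupos : forall j, 0 < nu j.
  move=> j; have [i _ hi] := colpos j; rewrite /nu /nuc sqrtr_gt0.
  apply: (lt_le_trans (exprn_gt0 2 hi)).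
  by apply: (@sum_ge_term _ (fun i => U i j ^+ 2) i) => k; exact: sqr_ge0.
have colZ : forall j, 1 - nu j ^+ 2 = \sum_i Z i j ^+ 2.
  move=> j; rewrite nusq; have := stiefel_entry _ j j hX; rewrite eqxx /= => h1.
  have e : \sum_i X i j * X i j = \sum_i (U i j ^+ 2 + Z i j ^+ 2).
    by apply: eq_bigr => i _; rewrite -expr2 (Xsq Xs X i j).
  rewrite (_ : 1 = \sum_i X i j * X i j); last by rewrite h1.
  rewrite e big_split /=; ring.
have nule1 : forall j, nu j <= 1.
  move=> j; have h := colZ j.
  have : 0 <= \sum_i Z i j ^+ 2 by apply: sumr_ge0 => i _; exact: sqr_ge0.
  rewrite -h => h2.
  have : nu j ^+ 2 <= 1 ^+ 2 by rewrite expr1n; lra.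
  by rewrite ler_sqr // nnegrE ltW.
have Ynn : nonneg_mx Y.
  move=> i j; rewrite /Y YE; apply: divr_ge0; [exact: U_ge0 | exact: ltW (nupos j)].
have Yst : Stiefel Y.
  apply: stiefel_of_entries => j k; case: (eqVneq j k) => [<-|jk].
    have e : \sum_i Y i j * Y i j = (\sum_i U i j ^+ 2) / nu j ^+ 2.
      rewrite mulr_suml; apply: eq_bigr => i _.
      by rewrite /Y YE -expr2 expr_div_n.
    rewrite e -nusq divff //; by rewrite sqrf_eq0 gt_eqF.
  rewrite big1 /=; first by [].
  move=> i _; rewrite /Y !YE /U !UE.
  case: ifP => hj; case: ifP => hk; rewrite ?mul0r ?mulr0 //.
  by move: jk; rewrite (huniq i j k) ?hj ?hk ?eqxx.
have Zd : frob Z <= d.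
  apply: le_trans hd; apply: frob_le_entry => i j; rewrite [(X - Xs) i j]subE; exact: (Zle Xs X i j nn).
have sqZ : sqF Z <= 1.
  have := sq_le_frob _ _ Zd.
  have : d ^+ 2 <= 1 by rewrite expr2; nra.
  lra.
have sqZ0 := sqF_ge0 Z.
have UY : frob (U - Y) <= frob Z.
  apply: frob_le_sq; first exact: frob_ge0.
  rewrite frob_sq.
  have colUY : forall j, \sum_i (U - Y) i j ^+ 2 = (1 - nu j) ^+ 2.
    move=> j.
    transitivity (\sum_i U i j ^+ 2 * (1 - (nu j)^-1) ^+ 2).
      by apply: eq_bigr => i _; rewrite subE /Y YE; ring.
    rewrite -mulr_suml -nusq.
    have := nupos j; move: (nu j) => x x0; field; by rewrite gt_eqF.
  have step : forall j, (1 - nu j) ^+ 2 <= (\sum_i Z i j ^+ 2) ^+ 2.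
    move=> j; rewrite -colZ.
    have h0 := nupos j; have h1 := nule1 j.
    have h2 : nu j ^+ 2 <= nu j.
      have h3 : nu j * nu j <= nu j * 1 by apply: ler_wpM2l => //; exact: ltW.
      by rewrite expr2; rewrite mulr1 in h3.
    rewrite ler_sqr ?nnegrE; lra.
  rewrite /sqF exchange_big /=.
  apply: (@le_trans _ _ (\sum_j (\sum_i Z i j ^+ 2) ^+ 2)).
    by apply: ler_sum => j _; rewrite colUY step.
  apply: (@le_trans _ _ ((\sum_j \sum_i Z i j ^+ 2) ^+ 2)).
    apply: sumsq_le => j; apply: sumr_ge0 => i _; exact: sqr_ge0.
  rewrite exchange_big /= -/(sqF Z).
  have h3 : sqF Z * sqF Z <= sqF Z * 1 by apply: ler_wpM2l.
  by rewrite expr2; rewrite mulr1 in h3.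
have XY : frob (X - Y) <= 2 * frob Z.
  have -> : X - Y = Z + (U - Y) by rewrite /Z addrA subrK.
  by apply: frob_add.
have Zl1 : frob Z <= (1 + 4 * r%:R / m) * vartheta X.
  apply: (le_trans (frob_le_l1 Z)).
  apply: (@le_trans _ _ (vartheta X +
     \sum_i \sum_j (if Xs i j != 0 then 0 else Num.max (X i j) 0))).
    rewrite /l1 /vartheta -big_split /=; apply: ler_sum => i _.
    rewrite -big_split /=; apply: ler_sum => j _; exact: Zabs.
  have := Q_bound _ _ _ nzr m0 hX Xpos.
  rewrite mulrDl mul1r; lra.
exists Y; split; first by split.
split.
  apply: (le_trans XY); rewrite -mulrA; apply: ler_wpM2l => //.
have -> : Y - Xs = (Y - X) + (X - Xs) by rewrite addrA subrK.
have -> : 4 * d = 2 * (2 * d) by ring.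
apply: frob_add.
  by rewrite frobBC; apply: (le_trans XY); rewrite ler_wpM2l.
lra.
Qed.

Lemma xp_s (x : R) : `|x - Num.max x 0| <= Num.max 0 (- x).
Proof.
have [h|h] := leP 0 x.
  by rewrite subrr normr0 le_max lexx.
rewrite subr0 ltr0_norm // le_max lexx orbT //.
Qed.

End Aux.

Theorem corollary3p7 (R : realType) (n r : nat)
  (O : set 'M[R]_(n, r)) (f : 'M[R]_(n, r) -> R) (Lf : R) :
  (1 <= r)%N -> (r <= n)%N ->
  open O -> Stiefel `<=` O ->
  C1_on f O ->
  lipschitz_const_on f Stiefel Lf ->
  ((1 < r)%N -> (r < n)%N ->
     forall X, local_min_on f Splus X -> no_zero_rows X) ->
  (* part 1: n = r or n > r = 1 *)
  ((n = r \/ ((r < n)%N /\ r = 1%N)) ->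
     forall kappa' : R, 0 < kappa' ->
     (forall Z : 'M[R]_(n, r), Stiefel Z -> distF Z Splus <= kappa' * distF Z nonneg_mx) ->
     forall Xs, local_min_on f Splus Xs ->
       (exists delta : R, 0 < delta /\
          forall X, Stiefel X -> frob (X - Xs) <= delta ->
            0 <= f X - f Xs + kappa' * Lf * vartheta X)
       /\ (forall rho : R, kappa' * Lf <= rho ->
            local_min_on (fun X => f X + rho * vartheta X) Stiefel Xs)) /\
  (* part 2: n > r > 1 *)
  ((1 < r)%N -> (r < n)%N ->
     forall Xs, local_min_on f Splus Xs ->
     let kappa : R := (21%:R / 10%:R) * Num.sqrt r%:R
                        * (1 + 3%:R * r%:R * (n - r)%:R) / min_nz_entry Xs in
       (exists delta : R, 0 < delta /\
          forall eps : R, 0 <= eps ->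
          forall X, Stiefel X -> vartheta X = eps -> frob (X - Xs) <= delta ->
            0 <= f X - f Xs + kappa * Lf * vartheta X)
       /\ (forall rho : R, kappa * Lf <= rho ->
            local_min_on (fun X => f X + rho * vartheta X) Stiefel Xs)) /\
  (* converse *)
  (forall rho : R, 0 < rho ->
     forall X, local_min_on (fun Y => f Y + rho * vartheta Y) Stiefel X ->
       nonneg_mx X -> local_min_on f Splus X).
Proof.
move=> r1 rn Oopen StO hC1 hlip hnz; split; [|split].
- move=> _ kap kap0 herr Xs hXs.
  have [[nnXs stXs] [d0 [d0p hmin]]] := hXs.
  have L0 := lf_ge0 _ _ _ r1 hlip stXs.
  have bound1 : exists delta : R, 0 < delta /\ forall X, Stiefel X ->
      frob (X - Xs) <= delta -> 0 <= f X - f Xs + kap * Lf * vartheta X.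
    exists (d0 / 4); split; first by rewrite divr_gt0.
    move=> X hX hd.
    apply: (@eps_arg R Lf (d0 / 4)) => //; first by rewrite divr_gt0.
    move=> e e0 ec.
    set S := [set frob (X - Y) | Y in Splus].
    have Slb : has_lbound S by exists 0 => y [Y _ <-]; exact: frob_ge0.
    have Sne : S !=set0 by exists (frob (X - Xs)); exists Xs.
    have [t [Y hY <-] ht] := inf_adherent e0 (conj Sne Slb).
    have infle : inf S <= frob (X - Xs) by apply: (ge_inf Slb); exists Xs.
    have dN : distF X nonneg_mx <= vartheta X.
      rewrite /distF.
      set T := [set frob (X - Y) | Y in nonneg_mx].
      have Tlb : has_lbound T by exists 0 => y [Y0 _ <-]; exact: frob_ge0.
      pose Xp : 'M[R]_(n, r) := \matrix_(i, j) Num.max (X i j) 0.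
      have TXp : T (frob (X - Xp)).
        exists Xp => //; move=> i j; rewrite mxE le_max lexx orbT //.
      apply: le_trans (ge_inf Tlb TXp) _.
      apply: le_trans (frob_le_l1 _) _; rewrite /l1 /vartheta.
      apply: ler_sum => i _; apply: ler_sum => j _.
      rewrite subE mxE; exact: xp_s.
    have dS := herr X hX.
    have hXY : frob (X - Y) <= kap * vartheta X + e.
      have : kap * distF X nonneg_mx <= kap * vartheta X by rewrite ler_wpM2l // ltW.
      rewrite /distF -/S in dS; lra.
    have hYXs : frob (Y - Xs) <= d0.
      have -> : Y - Xs = (Y - X) + (X - Xs) by rewrite addrA subrK.
      have -> : d0 = 2 * (d0 / 2) by field.
      apply: frob_add; last by lra.
      rewrite frobBC; lra.
    exact: (conclude _ _ _ _ _ _ _ _ L0 hlip hX hY.2 (hmin Y hY hYXs) hXY).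
  split => //.
  move=> rho hrho; have [d [dp hb]] := bound1.
  exact: (local_from_bound _ _ _ _ _ (conj nnXs stXs) dp hb hrho).
- move=> r2 rn2 Xs hXs kappa.
  have [[nnXs stXs] [d0 [d0p hmin]]] := hXs.
  have nzr := hnz r2 rn2 Xs hXs.
  have [mpos [m1 mle]] := min_nz_facts _ (ltnW r2) (conj nnXs stXs).
  have kge := kappa_ge _ mpos m1 r2 rn2.
  have L0 := lf_ge0 _ _ _ r1 hlip stXs.
  pose m := min_nz_entry Xs.
  have bound2 : exists delta : R, 0 < delta /\ forall X, Stiefel X ->
      frob (X - Xs) <= delta -> 0 <= f X - f Xs + kappa * Lf * vartheta X.
    exists (Num.min (d0 / 4) (Num.min (m / 4) (1 / 2))); split.
      by rewrite !lt_min !divr_gt0.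
    move=> X hX hd.
    set dl := Num.min _ _ in hd.
    have dm : dl <= m / 4 by rewrite /dl !ge_min lexx orbT.
    have d2 : dl <= 1 / 2 by rewrite /dl !ge_min lexx !orbT.
    have dd : dl <= d0 / 4 by rewrite /dl !ge_min lexx.
    have [Y [hY [hXY hYXs]]] := construct _ _ _ _ (conj nnXs stXs) nzr mpos mle hX hd dm d2.
    have hYd : frob (Y - Xs) <= d0 by lra.
    have hXY' : frob (X - Y) <= kappa * vartheta X + 0.
      rewrite addr0; apply: le_trans hXY _; apply: ler_wpM2r => //.
      exact: vartheta_ge0.
    have := conclude _ _ _ _ _ _ _ _ L0 hlip hX hY.2 (hmin Y hY hYd) hXY'.
    by rewrite mulr0 oppr0.
  split.
    have [d [dp hb]] := bound2; exists d; split => // eps _ X hX _ hd.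
    exact: hb.
  move=> rho hrho; have [d [dp hb]] := bound2.
  exact: (local_from_bound _ _ _ _ _ (conj nnXs stXs) dp hb hrho).
- move=> rho _ X hX hnn; exact: converse_part _ _ _ hX hnn.
Qed.
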